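(* Suppose that the integral quadruple $(a,b,c,d)$ with $d>c>b>a\ge2$ satisfies: (1) $a,b,c,d$ are pairwise coprime; (2) $\frac{1}{a}+\frac{1}{b}+\frac{1}{c}+\frac{1}{d}=1+\frac{1}{abcd}$. Then $(a,b,c,d)$ is either $(2,3,7,41)$ or $(2,3,11,13)$. *)

(* Defs.v *)
From mathcomp Require Import all_boot all_order all_algebra.

(* Main.v *)
Require Import Defs.
From mathcomp Require Import all_boot all_order all_algebra.
From mathcomp Require Import ring lra zify.
Import GRing.Theory Num.Theory.

Lemma invQ_le (n m : nat) : (0 < m)%N -> (m <= n)%N -> ((n%:Q)^-1 <= ((m%:R : rat))^-1)%R.
Proof.
move=> m0 mn; rewrite -pmulrn lef_pV2 ?ler_nat // posrE ltr0n //; exact: leq_trans mn.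
Qed.

Lemma invQ_gt0 (n : nat) : (0 < n)%N -> (0 < (n%:Q)^-1)%R.
Proof. by move=> n0; rewrite invr_gt0 ltr0n. Qed.

Theorem proposition3p1 (a b c d : nat) :
  (2 <= a)%N -> (a < b)%N -> (b < c)%N -> (c < d)%N ->
  coprime a b -> coprime a c -> coprime a d ->
  coprime b c -> coprime b d -> coprime c d ->
  ((a%:Q)^-1 + (b%:Q)^-1 + (c%:Q)^-1 + (d%:Q)^-1
     = 1 + ((a * b * c * d)%:Q)^-1)%R ->
  (a, b, c, d) = (2, 3, 7, 41) \/ (a, b, c, d) = (2, 3, 11, 13).
Proof.
move=> a2 ab bc cd cab cac cad cbc cbd ccd H.
have E : (b*c*d + a*c*d + a*b*d + a*b*c = a*b*c*d + 1)%N.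
  apply/eqP; rewrite -(eqr_nat rat); apply/eqP.
  have a0 : (a%:Q != 0)%R by rewrite pnatr_eq0; lia.
  have b0 : (b%:Q != 0)%R by rewrite pnatr_eq0; lia.
  have c0 : (c%:Q != 0)%R by rewrite pnatr_eq0; lia.
  have d0 : (d%:Q != 0)%R by rewrite pnatr_eq0; lia.
  have k1 : ((b*c*d + a*c*d + a*b*d + a*b*c)%:R =
     ((a%:Q)^-1 + (b%:Q)^-1 + (c%:Q)^-1 + (d%:Q)^-1) * (a*b*c*d)%:R :> rat)%R.
    rewrite !natrD !natrM; field; by rewrite a0 b0 c0 d0.
  have k2 : ((a*b*c*d + 1)%:R =
     (1 + ((a * b * c * d)%:Q)^-1) * (a*b*c*d)%:R :> rat)%R.
    rewrite !natrD !natrM; field; by rewrite a0 b0 c0 d0.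
  by rewrite k1 k2 H.
have pos : (0 < ((a * b * c * d)%:Q)^-1)%R.
  apply: invQ_gt0; rewrite !muln_gt0; apply/andP; split; [apply/andP; split; [apply/andP; split|]|]; lia.
have ha : a = 2%N.
  clear E; case: (ltngtP a 2) => // ha; first lia.
  have h1 := @invQ_le a 3 isT ha.
  have h2 := @invQ_le b 4 isT ltac:(lia).
  have h3 := @invQ_le c 5 isT ltac:(lia).
  have h4 := @invQ_le d 6 isT ltac:(lia).
  clear -H pos h1 h2 h3 h4; move: H pos h1 h2 h3 h4; generalize (a%:Q^-1)%R (b%:Q^-1)%R (c%:Q^-1)%R (d%:Q^-1)%R ((a*b*c*d)%:Q^-1)%R; clear => x y z w t *; exfalso; lra.
subst a.
have oddb : odd b by move: cab; rewrite coprime2n.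
have oddc : odd c by move: cac; rewrite coprime2n.
have oddd : odd d by move: cad; rewrite coprime2n.
have hb : b = 3%N.
  clear E; case: (ltngtP b 4) => hb5; [lia | | by subst b; move: oddb].
  have hc7 : (7 <= c)%N.
    have : (b.+1 < c)%N.
      rewrite ltn_neqAle bc andbT; apply/eqP => e; move: oddc; rewrite -e /= oddb.
      done.
    lia.
  have hd9 : (9 <= d)%N.
    have : (c.+1 < d)%N.
      rewrite ltn_neqAle cd andbT; apply/eqP => e; move: oddd; rewrite -e /= oddc.
      done.
    lia.
  have h2 := @invQ_le b 5 isT hb5.
  have h3 := @invQ_le c 7 isT hc7.
  have h4 := @invQ_le d 9 isT hd9.
  clear -H pos h2 h3 h4; move: H pos h2 h3 h4; generalize (b%:Q^-1)%R (c%:Q^-1)%R (d%:Q^-1)%R ((2*b*c*d)%:Q^-1)%R; clear => y z w t *; exfalso; lra.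
subst b.
have E' : (c*d + 1 = 6*c + 6*d)%N.
  move: E; rewrite -!mulnA (mulnC 2 (3 * _)) -!mulnA; clear; lia.
clear E H pos.
have hc : (c <= 11)%N by clear -E' cd; nia.
have c3 : ~~ (3 %| c) by rewrite -prime_coprime.
case: c hc bc oddc c3 cbc cac cd ccd E' {cbd cad oddd} => [|[|[|[|[|[|[|[|[|[|[|[|c]]]]]]]]]]]] //= *; first [ by left; have -> : d = 41 by lia | by right; have -> : d = 13 by lia | exfalso; lia ].
Qed.
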